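(* Let $p$ be an odd prime. If $\lambda$ is a nonempty BG-partition, then $\lambda^{(1)*}$ is a BG-partition; i.e. removing the $p$-rim* of a BG-partition yields a BG-partition.
   Context: Partitions: $\lambda=(\lambda_1\ge\lambda_2\ge\cdots)$ with finitely many nonzero parts; $l(\lambda)$ = number of nonzero parts; Young diagram $[\lambda]=\{(i,j): i\ge1, 1\le j\le\lambda_i\}$ ($i$ = row, increasing downward). $\lambda'$ is the conjugate; self-conjugate means $\lambda=\lambda'$. $k(\lambda)=\max\{i:\lambda_i\ge i\}$; hook length $h_{ij}=\lambda_i+\lambda'_j-i-j+1$. A BG-partition is a self-conjugate partition with $p\nmid h_{ii}$ for all $1\le i\le k(\lambda)$ (the empty partition counts as one). Rim and $p$-rim: the rim is the set of nodes $(i,j)\in[\lambda]$ with $(i+1,j+1)\notin[\lambda]$. Label rim nodes $1,2,\dots$ along the rim path from $(1,\lambda_1)$ to $(l(\lambda),1)$. The first $p$-segment is the rim nodes labelled $1,\dots,p$ (or all if fewer). If the last node $(i,j)$ of a $p$-segment lies in the last row, stop; otherwise with $l$ the smallest label in row $i+1$ the next $p$-segment is the rim nodes labelled $l,\dots,l+p-1$ (or up to the last). The $p$-rim is the union of the $p$-segments. $p$-rim*: $U_\lambda=\{(i,j)\in p\text{-rim of }\lambda: i\le j\}$, $L_\lambda=\{(j,i):(i,j)\in U_\lambda\}$, $\mathrm{Rim}^*_p(\lambda)=U_\lambda\cup L_\lambda$. $\lambda^{(1)*}$ is the partition with Young diagram $[\lambda]\setminus\mathrm{Rim}^*_p(\lambda)$.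 *)

(* Defs.v *)
(* Partitions are represented as sequences of their nonzero
   parts lam = [:: lam_1; lam_2; ...]; nodes (i,j) are 1-indexed (row i, column j). *)
From mathcomp Require Import all_boot.
Set Implicit Arguments. Unset Strict Implicit. Unset Printing Implicit Defensive.

(* lam_i, 1-indexed; 0 beyond the length *)
Definition part (lam : seq nat) (i : nat) : nat := nth 0 lam i.-1.

Definition is_partition (lam : seq nat) : bool :=
  sorted geq lam && all (fun x => 0 < x) lam.

Definition in_diag (lam : seq nat) (x : nat * nat) : bool :=
  [&& 1 <= x.1, x.1 <= size lam, 1 <= x.2 & x.2 <= part lam x.1].

Definition conj_part (lam : seq nat) : seq nat :=
  mkseq (fun j => count (fun x => j.+1 <= x) lam) (head 0 lam).

Definition self_conjugate (lam : seq nat) : bool := conj_part lam == lam.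

Definition kdiag (lam : seq nat) : nat :=
  \max_(i < (size lam).+1 | i <= part lam i) i.

Definition hook (lam : seq nat) (i j : nat) : nat :=
  part lam i + part (conj_part lam) j + 1 - i - j.

Definition BG (p : nat) (lam : seq nat) : Prop :=
  [/\ is_partition lam, self_conjugate lam &
      forall i, 1 <= i <= kdiag lam -> ~~ (p %| hook lam i i)].

(* rim nodes in rim-path order from (1, lam_1) to (l(lam), 1):
   row i contributes columns lam_i, lam_i - 1, ..., max(1, lam_{i+1}) *)
Definition rim (lam : seq nat) : seq (nat * nat) :=
  flatten [seq [seq (i, j) | j <- rev (iota (maxn 1 (part lam i.+1))
                                     ((part lam i).+1 - maxn 1 (part lam i.+1)))]
          | i <- iota 1 (size lam)].

(* sanity: membership in [rim lam] coincides with the defining property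
   (i,j) in [lam] and (i+1,j+1) not in [lam] (not used in the statement) *)
Definition in_rim (lam : seq nat) (x : nat * nat) : bool :=
  in_diag lam x && ~~ in_diag lam (x.1.+1, x.2.+1).

(* p-segments: starting at position s (0-indexed label s+1), take the rim
   nodes with labels s+1, ..., s+p (or up to the last one); if the last node
   lies in the last row, stop, otherwise restart at the smallest label in the
   next row. *)
Fixpoint prim_aux (p : nat) (lam : seq nat) (fuel s : nat) : seq (nat * nat) :=
  match fuel with
  | 0 => [::]
  | fuel'.+1 =>
      let seg := take p (drop s (rim lam)) in
      if seg is [::] then [::] else
      let i := (last (0, 0) seg).1 in
      if size lam <= i then seg
      else seg ++ prim_aux p lam fuel' (find (fun x => x.1 == i.+1) (rim lam))
  end.

Definition p_rim (p : nat) (lam : seq nat) : seq (nat * nat) :=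
  prim_aux p lam (size (rim lam)).+1 0.

Definition in_U (p : nat) (lam : seq nat) (x : nat * nat) : bool :=
  (x \in p_rim p lam) && (x.1 <= x.2).

Definition in_rimstar (p : nat) (lam : seq nat) (x : nat * nat) : bool :=
  in_U p lam x || in_U p lam (x.2, x.1).

(* Main.v *)
Require Import Defs.
From mathcomp Require Import all_boot.
From mathcomp Require Import zify.
Set Implicit Arguments. Unset Strict Implicit. Unset Printing Implicit Defensive.


Lemma part_pos lam i : is_partition lam -> 1 <= i <= size lam -> 1 <= part lam i.
Proof.
case/andP=> _ /allP H; case: i => [|i] //= il; apply: H; rewrite /part mem_nth //.
Qed.

Lemma part_out lam i : size lam < i -> part lam i = 0.
Proof. by move=> h; rewrite /part nth_default //; lia. Qed.

Lemma geq_trans' : transitive geq.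
Proof. by move=> a b c h1 h2; apply: leq_trans h2 h1. Qed.

Lemma part_mono lam i j : is_partition lam -> i <= j -> part lam j <= part lam i.
Proof.
case/andP=> s _ ij.
have [jl|jl] := ltnP j.-1 (size lam).
  have il : i.-1 < size lam by case: i ij => [|i]; case: j jl => [|j] //=; lia.
  have ij' : i.-1 <= j.-1 by case: i ij {il} => [|i]; case: j jl => [|j] //=; lia.
  rewrite /part; apply: (sorted_leq_nth geq_trans' leqnn (0:nat) s); rewrite ?inE //.
by rewrite /part (nth_default 0 jl).
Qed.

Lemma part_le1 lam i : is_partition lam -> part lam i <= part lam 1.
Proof. move=> h; case: i => [|i] //; apply: part_mono => //. Qed.

Lemma part0 lam : part lam 0 = part lam 1.
Proof. by []. Qed.

Lemma count_geq lam i j : is_partition lam -> 1 <= i -> 1 <= j ->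
  (i <= count (fun x => j <= x) lam) = (i <= size lam) && (j <= part lam i).
Proof.
elim: lam i => [|x s IH] i /=; first by rewrite /part /= nth_nil; lia.
move=> hp i1 j1.
have hs : is_partition s.
  by move: hp; rewrite /is_partition /= => /andP[/path_sorted -> /andP[_ ->]].
have hall : all (fun y => y <= x) s.
  move: hp => /andP[hs' _]; move: hs'.
  rewrite /= (path_sortedE geq_trans') => /andP[/allP H _]; apply/allP => y /H; done.
case: i i1 => [|i] // _.
case: i => [|i].
  rewrite /part /=; case: (leqP j x) => jx /=; first lia.
  have -> : count (fun y => j <= y) s = 0.
    apply/eqP; rewrite -leqn0 leqNgt -has_count; apply/hasP => -[y ys /= jy].
    move/allP: hall => /(_ y ys); lia.
  lia.
have e : part (x :: s) i.+2 = part s i.+1 by [].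
rewrite e; case: (leqP j x) => jx /=.
  rewrite add1n ltnS IH //; lia.
have -> : count (fun y => j <= y) s = 0.
  apply/eqP; rewrite -leqn0 leqNgt -has_count; apply/hasP => -[y ys /= jy].
  move/allP: hall => /(_ y ys); lia.
have : part s i.+1 <= x.
  have [il|il] := ltnP i (size s).
    by move/allP: hall; apply; rewrite /part mem_nth.
  by rewrite part_out //; lia.
lia.
Qed.

Lemma conj_part_nth lam j : is_partition lam -> 1 <= j ->
  part (conj_part lam) j = count (fun x => j <= x) lam.
Proof.
move=> hp; case: j => [|j] // _; rewrite /part /conj_part /=.
have [jl|jl] := ltnP j (head 0 lam).
  by rewrite nth_mkseq.
rewrite nth_default ?size_mkseq //.
apply/esym/eqP; rewrite -leqn0 leqNgt -has_count; apply/hasP => -[y ys /= jy].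
have : y <= part lam 1.
  have := part_le1 (index y lam).+1 hp; rewrite /part /= nth_index //.
case: lam hp ys jl jy => //= x s _ _; rewrite /part /=. lia.
Qed.

Lemma sc_head lam : self_conjugate lam -> part lam 1 = size lam.
Proof. by move/eqP=> e; rewrite -{2}e /conj_part size_mkseq; case: lam {e}. Qed.

Lemma diag_conj lam i j : is_partition lam -> 1 <= i -> 1 <= j ->
  (i <= size lam) && (j <= part lam i) = (i <= part (conj_part lam) j).
Proof. by move=> hp i1 j1; rewrite conj_part_nth // count_geq. Qed.

Lemma diag_sym lam i j : is_partition lam -> self_conjugate lam ->
  in_diag lam (i, j) = in_diag lam (j, i).
Proof.
move=> hp /eqP sc; rewrite /in_diag /=.
case: i => [|i]; first by case: j => [|j] /=; rewrite ?andbF.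
case: j => [|j]; first by rewrite /= !andbF.
rewrite /= diag_conj // sc.
case: (leqP j.+1 (size lam)) => jl //=.
by rewrite (part_out jl); lia.
Qed.

Lemma kdiag_le lam i : is_partition lam -> 1 <= i -> i <= kdiag lam -> i <= part lam i.
Proof.
move=> hp i1 ik; rewrite leqNgt; apply/negP => lt.
have : kdiag lam <= i.-1.
  apply/bigmax_leqP => k /= kp.
  have [ki|ki] := ltnP k i; first by lia.
  have := part_mono hp ki. lia.
lia.
Qed.

Lemma le_kdiag lam i : 1 <= i -> i <= part lam i -> i <= kdiag lam.
Proof.
move=> i1 ip.
have il : i < (size lam).+1.
  rewrite ltnS; case: (leqP i (size lam)) => // h; rewrite part_out in ip; lia.
exact: (@leq_bigmax_cond _ (fun k : 'I_(size lam).+1 => k <= part lam k) (fun k => nat_of_ord k) (Ordinal il)).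
Qed.

Lemma dc_iter (P : nat -> bool) : (forall j, 1 <= j -> P j.+1 -> P j) ->
  forall j j', 1 <= j' <= j -> P j -> P j'.
Proof.
move=> H; elim=> [|j IH] j' hj Pj; first lia.
have [e|ne] := eqVneq j' j.+1; first by rewrite e.
apply: IH; first lia. apply: H => //; lia.
Qed.

Lemma count_prefix (P : nat -> bool) B : (forall j, 1 <= j -> P j.+1 -> P j) ->
  count P (iota 1 B) <= B /\
  forall j, 1 <= j <= B -> P j = (j <= count P (iota 1 B)).
Proof.
move=> H; elim: B => [|B [IH1 IH2]]; first by split => // j; lia.
have -> : iota 1 B.+1 = iota 1 B ++ [:: B.+1] by rewrite -(addn1 B) iotaD add1n addn1.
rewrite count_cat /= addn0.
case PB: (P B.+1) => /=.
  have allP : forall j, 1 <= j <= B -> P j.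
    move=> j hj; apply: (dc_iter H (j:=B.+1)) => //; lia.
  have cB : count P (iota 1 B) = B.
    case: B IH1 IH2 allP {PB} => [|B] IH1 IH2 allP; first by move: IH1; lia.
    apply/eqP; rewrite eqn_leq IH1 /= -IH2 ?allP //; lia.
  rewrite cB; split; first lia.
  move=> j hj; have [jB|jB] := leqP j B; first by rewrite allP; lia.
  have -> : j = B.+1 by lia.
  by rewrite PB addn1 ltnSn.
rewrite addn0; split; first lia.
move=> j hj; have [jB|jB] := leqP j B; first by rewrite IH2 //; lia.
have -> : j = B.+1 by lia.
rewrite PB; apply/esym/negbTE; rewrite -ltnNge; lia.
Qed.

Lemma count_prefix2 (P : nat -> bool) B : (forall j, 1 <= j -> P j.+1 -> P j) ->
  (forall j, P j -> 1 <= j <= B) ->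
  forall j, P j = (1 <= j) && (j <= count P (iota 1 B)).
Proof.
move=> H Hb j; have [c1 c2] := count_prefix B H.
case Pj: (P j).
  have hj := Hb _ Pj; have := c2 j hj; rewrite Pj => <-.
  by move: hj => /andP[-> _].
apply/esym/negbTE/negP => /andP[j1 jc]; move: Pj; rewrite c2 ?jc //; lia.
Qed.

Lemma sorted_map_iota (f : nat -> nat) a n : (forall i, f i.+1 <= f i) ->
  sorted geq [seq f i | i <- iota a n].
Proof.
move=> H; elim: n a => [|n IH] a //=.
case: n IH => [|n] IH //=.
by rewrite H /=; have := IH a.+1.
Qed.

Lemma mk_partition (S : nat * nat -> bool) B :
  (forall i j, S (i, j) -> [&& 1 <= i, i <= B, 1 <= j & j <= B]) ->
  (forall i j, 1 <= i -> S (i.+1, j) -> S (i, j)) ->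
  (forall i j, 1 <= j -> S (i, j.+1) -> S (i, j)) ->
  exists mu, is_partition mu /\ forall x, in_diag mu x = S x.
Proof.
move=> Hb Hr Hc.
pose rl i := count (fun j => S (i, j)) (iota 1 B).
have rlP : forall i j, S (i, j) = (1 <= j) && (j <= rl i).
  move=> i; apply: count_prefix2; first by move=> j j1; apply: Hc.
  by move=> j /Hb; lia.
pose n := count (fun i => S (i, 1)) (iota 1 B).
have nP : forall i, S (i, 1) = (1 <= i) && (i <= n).
  apply: count_prefix2; first by move=> i i1; apply: Hr.
  by move=> i /Hb; lia.
have rlmono : forall i, rl i.+2 <= rl i.+1.
  move=> i; case e: (rl i.+2) => [|c] //.
  have : S (i.+2, c.+1) by rewrite rlP e; lia.
  move/Hr => /(_ isT); rewrite rlP; lia.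
exists (mkseq (fun i => rl i.+1) n); split.
  apply/andP; split; first exact: sorted_map_iota.
  apply/allP => x /mapP [i]; rewrite mem_iota => hi ->.
  have : S (i.+1, 1) by rewrite nP; lia.
  by rewrite rlP.
case=> i j; rewrite /in_diag /= size_mkseq.
case: i => [|i].
  rewrite /=; apply/esym/negbTE/negP => /Hb; lia.
have [il|il] := leqP i.+1 n.
  rewrite /part /= nth_mkseq; last lia.
  rewrite rlP; lia.
rewrite /=; apply/esym/negbTE/negP => Sij.
have : S (i.+1, 1).
  apply: (dc_iter (P := fun j => S (i.+1, j)) _ (j:=j)) => //.
    by move=> k k1; apply: Hc.
  by move: (Hb _ _ Sij); lia.
rewrite nP; lia.
Qed.


Definition wd lam i := (part lam i).+1 - maxn 1 (part lam i.+1).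
Definition rowseg lam i : seq (nat * nat) :=
  [seq (i, j) | j <- rev (iota (maxn 1 (part lam i.+1)) (wd lam i))].
Definition shp lam := [seq wd lam i | i <- iota 1 (size lam)].
Definition pos lam (x : nat * nat) := part lam 1 + x.1 - 1 - x.2.
Definition rimnode lam (x : nat * nat) :=
  [&& 1 <= x.1, x.1 <= size lam, maxn 1 (part lam x.1.+1) <= x.2 & x.2 <= part lam x.1].

Lemma rimE lam : rim lam = flatten [seq rowseg lam i | i <- iota 1 (size lam)].
Proof. by []. Qed.

Lemma shapeE lam : shape [seq rowseg lam i | i <- iota 1 (size lam)] = shp lam.
Proof.
rewrite /shape -map_comp; apply: eq_map => i /=.
by rewrite /rowseg size_map size_rev size_iota.
Qed.

Lemma nth_rowseg lam i c : is_partition lam -> 1 <= i <= size lam -> c < wd lam i ->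
  nth (0, 0) (rowseg lam i) c = (i, part lam i - c).
Proof.
move=> hp hi hc; rewrite /rowseg (nth_map 0); last by rewrite size_rev size_iota.
rewrite nth_rev ?size_iota // nth_iota; last by move: hc; rewrite /wd; lia.
have := part_pos hp hi; have := part_mono hp (leqnSn i); move: hc; rewrite /wd.
move=> ? ? ?; congr pair; lia.
Qed.

Lemma pre_sum lam r : is_partition lam -> r < size lam ->
  sumn (take r (shp lam)) = part lam 1 + r - part lam r.+1.
Proof.
move=> hp; elim: r => [|r IH] hr; first by rewrite take0 /=; lia.
rewrite (take_nth 0); last by rewrite size_map size_iota; lia.
rewrite sumn_rcons IH; last lia.
rewrite (nth_map 0); last by rewrite size_iota; lia.
rewrite nth_iota; last lia.
rewrite /wd add1n.
have h1 := part_pos hp (i:=r.+2) ltac:(lia).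
have h2 := part_mono hp (leqnSn r.+1).
have h3 := part_le1 r.+1 hp.
lia.
Qed.

Lemma rim_size lam : is_partition lam -> lam != [::] ->
  size (rim lam) = part lam 1 + size lam - 1.
Proof.
move=> hp hne; rewrite rimE size_flatten shapeE.
have l1 : 0 < size lam by case: lam hp hne.
have -> : shp lam = take (size lam).-1 (shp lam) ++ [:: nth 0 (shp lam) (size lam).-1].
  have hs : (size lam).-1 < size (shp lam) by rewrite size_map size_iota; lia.
  rewrite cats1 -(take_nth 0 hs) prednK //.
  by rewrite take_oversize // size_map size_iota.
rewrite sumn_cat pre_sum //; last lia.
rewrite /= (nth_map 0); last by rewrite size_iota; lia.
rewrite nth_iota; last lia.
rewrite /wd ?add1n prednK // (@part_out lam (size lam).+1) //.
have h1 := part_pos hp (i:=size lam) ltac:(lia).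
have h3 := part_le1 (size lam) hp.
lia.
Qed.

Lemma rim_nth lam q : is_partition lam -> q < size (rim lam) ->
  rimnode lam (nth (0, 0) (rim lam) q) /\ pos lam (nth (0, 0) (rim lam) q) = q.
Proof.
move=> hp hq; have hq' := hq; rewrite rimE size_flatten shapeE in hq'.
rewrite rimE nth_flatten shapeE.
set i := reshape_index _ q; set c := reshape_offset _ q.
have hi : i < size (shp lam) by apply: reshape_indexP.
have hc : c < nth 0 (shp lam) i by apply: reshape_offsetP.
have hqe : q = flatten_index (shp lam) i c by rewrite reshape_indexK.
move: hi hc hqe; rewrite size_map size_iota => hi.
rewrite (nth_map 0) ?size_iota // nth_iota // add1n => hc hqe.
rewrite (nth_map 0) ?size_iota // nth_iota // add1n in hc.
rewrite nth_rowseg //.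
rewrite /flatten_index pre_sum // in hqe.
have h1 := part_pos hp (i:=i.+1) ltac:(lia).
have h2 := part_mono hp (leqnSn i.+1).
have h3 := part_le1 i.+1 hp.
move: hc; rewrite /wd => hc.
split; last (rewrite /pos /=; lia). rewrite /rimnode /=. lia.
Qed.

Lemma rim_nth' lam x : is_partition lam -> rimnode lam x ->
  pos lam x < size (rim lam) /\ nth (0, 0) (rim lam) (pos lam x) = x.
Proof.
case: x => [[|i] j] hp; first by case/and4P.
case/and4P=> [_ il jm jp]; rewrite /= in il jm jp.
have hw : nth 0 (shp lam) i = wd lam i.+1.
  by rewrite (nth_map 0) ?size_iota ?nth_iota ?add1n //; lia.
have hc : part lam i.+1 - j < nth 0 (shp lam) i.
  by rewrite hw /wd; lia.
have he : pos lam (i.+1, j) = flatten_index (shp lam) i (part lam i.+1 - j).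
  rewrite /flatten_index pre_sum //.
  have h3 := part_le1 i.+1 hp.
  rewrite /pos /=; lia.
rewrite he; split.
  by rewrite rimE size_flatten shapeE; apply: flatten_indexP.
rewrite rimE nth_flatten shapeE flatten_indexKl // flatten_indexKr //.
rewrite (nth_map 0) ?size_iota ?nth_iota ?add1n; last lia; rewrite ?nth_iota; try lia.
rewrite nth_rowseg //; last by rewrite -hw.
congr pair; lia.
Qed.


Definition rst lam i := pos lam (i, part lam i).

Lemma rimnode_start lam i : is_partition lam -> 1 <= i <= size lam ->
  rimnode lam (i, part lam i).
Proof.
move=> hp hi; rewrite /rimnode /=.
have := part_pos hp hi; have := part_mono hp (leqnSn i); lia.
Qed.

Lemma pos_inj lam q1 q2 : is_partition lam -> q1 < size (rim lam) -> q2 < size (rim lam) ->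
  nth (0,0) (rim lam) q1 = nth (0,0) (rim lam) q2 -> q1 = q2.
Proof.
move=> hp h1 h2 e; have [_ <-] := rim_nth hp h1; have [_ <-] := rim_nth hp h2.
by rewrite e.
Qed.

Lemma find_row lam i : is_partition lam -> 1 <= i <= size lam ->
  find (fun x : nat * nat => x.1 == i) (rim lam) = rst lam i.
Proof.
move=> hp hi.
have [hs hn] := rim_nth' hp (rimnode_start hp hi).
have hN : has (fun x : nat * nat => x.1 == i) (rim lam).
  by apply/hasP; exists (nth (0,0) (rim lam) (rst lam i)); rewrite ?mem_nth // hn.
have [lt|ge] := ltnP (find (fun x : nat * nat => x.1 == i) (rim lam)) (rst lam i).
  have /eqP ea := nth_find (0,0) hN.
  have hf : find (fun x : nat * nat => x.1 == i) (rim lam) < size (rim lam).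
    by apply: ltn_trans lt hs.
  have [rn pe] := rim_nth hp hf.
  have h3 := part_le1 i hp.
  move: rn pe ea lt; set y := nth _ _ _; case: y => a b.
  rewrite /rimnode /rst /pos /= => /and4P[_ _ _ hb] <- ea; subst a. lia.
have [gt|eq] := ltnP (rst lam i) (find (fun x : nat * nat => x.1 == i) (rim lam)).
  by have := before_find (0,0) gt; rewrite hn /= eqxx.
apply/eqP; rewrite eqn_leq; apply/andP; split => //.
Qed.


Lemma mem_seg (p : nat) (R : seq (nat * nat)) s x : x \in take p (drop s R) ->
  exists q, [/\ s <= q < s + p, q < size R & x = nth (0,0) R q].
Proof.
move=> hx; set t := index x (take p (drop s R)).
have ht : t < size (take p (drop s R)) by rewrite index_mem.
move: (ht); rewrite size_take size_drop => ht'.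
have tp : t < p by move: ht'; case: ifP => [h|/negbT h]; lia.
exists (s + t); split.
- lia.
- by move: ht'; case: ifP => [h|/negbT h]; lia.
- by rewrite -nth_drop -(nth_take _ tp) nth_index.
Qed.

Lemma seg_mem (p : nat) (R : seq (nat * nat)) s q : s <= q < s + p -> q < size R ->
  nth (0,0) R q \in take p (drop s R).
Proof.
move=> hq hR.
have -> : nth (0,0) R q = nth (0,0) (take p (drop s R)) (q - s).
  rewrite nth_take; last lia.
  by rewrite nth_drop subnKC //; lia.
have hsz : q - s < size (take p (drop s R)).
  rewrite size_take size_drop; case: ifP => [h|/negbT h]; lia.
exact: mem_nth.
Qed.

Lemma seg_nil (p : nat) (R : seq (nat * nat)) s : 0 < p -> s < size R ->
  take p (drop s R) <> [::].
Proof.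
move=> hp hs e; have h : s <= s < s + p by lia.
by have := seg_mem h hs; rewrite e in_nil.
Qed.

Lemma seg_last (p : nat) (R : seq (nat * nat)) s : 0 < p -> s < size R ->
  last (0,0) (take p (drop s R)) = nth (0,0) R (minn (s + p) (size R)).-1.
Proof.
move=> hp hs; rewrite -nth_last nth_take; last first.
  rewrite size_take size_drop; case: ifP => [h|/negbT h]; lia.
rewrite nth_drop size_take size_drop; congr nth; case: ifP => [h|/negbT h]; lia.
Qed.

Lemma prim_auxS p lam fuel s : prim_aux p lam fuel.+1 s =
  let seg := take p (drop s (rim lam)) in
  if seg is [::] then [::] else
  if size lam <= (last (0,0) seg).1 then seg
  else seg ++ prim_aux p lam fuel
         (find (fun x : nat * nat => x.1 == (last (0,0) seg).1.+1) (rim lam)).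
Proof. by []. Qed.

Lemma L1 p lam fuel s x : is_partition lam ->
  (exists2 r, 1 <= r <= size lam & s = rst lam r) ->
  x \in prim_aux p lam fuel s ->
  exists r q, [/\ 1 <= r <= size lam, rst lam r <= q < rst lam r + p,
     q < size (rim lam), x = nth (0,0) (rim lam) q &
     forall q', rst lam r <= q' < rst lam r + p -> q' < size (rim lam) ->
       nth (0,0) (rim lam) q' \in prim_aux p lam fuel s].
Proof.
elim: fuel s => [|f IH] s hp [r hr ->]; first done.
rewrite prim_auxS /=.
set seg := take p (drop (rst lam r) (rim lam)).
case E: seg => [|y ys] //; rewrite -E.
case: ifP => hl.
  move=> hx; have [q [hq1 hq2 ->]] := mem_seg hx.
  by exists r, q; split=> // q' h1 h2; apply: seg_mem.
rewrite mem_cat => /orP[hx|hx].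
  have [q [hq1 hq2 ->]] := mem_seg hx.
  by exists r, q; split=> // q' h1 h2; rewrite mem_cat seg_mem.
have hl' : (last (0, 0) seg).1 < size lam by rewrite ltnNge hl.
have hrow : exists2 r', 1 <= r' <= size lam &
    find (fun x : nat * nat => x.1 == (last (0, 0) seg).1.+1) (rim lam) = rst lam r'.
  by exists (last (0, 0) seg).1.+1; [lia | rewrite find_row //; lia].
have [r' [q [h1 h2 h3 h4 h5]]] := IH _ hp hrow hx.
exists r', q; split=> // q' g1 g2.
by rewrite mem_cat h5 ?orbT.
Qed.

Lemma head_in p lam f s : 0 < p -> s < size (rim lam) ->
  nth (0,0) (rim lam) s \in prim_aux p lam f.+1 s.
Proof.
move=> hp hs; rewrite prim_auxS /=.
have hm : nth (0,0) (rim lam) s \in take p (drop s (rim lam)).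
  by apply: seg_mem => //; lia.
set seg := take p (drop s (rim lam)) in hm *.
case E: seg => [|y ys]; first by rewrite E in hm.
rewrite -E; case: ifP => _ //; by rewrite mem_cat hm.
Qed.

Lemma L2 p lam fuel s q i : is_partition lam -> 0 < p ->
  size (rim lam) < s + fuel -> 2 <= i <= size lam -> q.+1 = rst lam i ->
  nth (0,0) (rim lam) q \in prim_aux p lam fuel s ->
  nth (0,0) (rim lam) q.+1 \in prim_aux p lam fuel s.
Proof.
move=> hp p0; elim: fuel s => [|f IH] s // hN hi hqi.
rewrite prim_auxS /=.
set seg := take p (drop s (rim lam)).
case E: seg => [|y ys] //; rewrite -E.
have hs : s < size (rim lam).
  rewrite ltnNge; apply/negP => h; move: E; rewrite /seg drop_oversize //.
have hsi : rst lam i < size (rim lam).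
  by have [] := rim_nth' hp (rimnode_start hp (i:=i) ltac:(lia)).
set N := size (rim lam) in hN hs hsi *.
have hq : q < N by lia.
have hlast := seg_last p0 hs; rewrite -/seg -/N in hlast.
have key : nth (0,0) (rim lam) q \in seg ->
    nth (0,0) (rim lam) q.+1 \in seg \/
    (q.+1 = s + p /\ last (0,0) seg = (i.-1, part lam i)).
  move=> hx; have [q0 [hq1 hq2 e]] := mem_seg hx.
  have eq0 := pos_inj hp hq hq2 e; subst q0.
  have [lt|ge] := ltnP q.+1 (s + p).
    by left; apply: seg_mem => //; lia.
  right; split; first lia.
  rewrite hlast.
  have hr : rimnode lam (i.-1, part lam i).
    have := part_pos hp (i:=i) ltac:(lia); have := part_mono hp (leq_pred i).
    rewrite /rimnode /=; have -> : i.-1.+1 = i by lia. lia.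
  have [_ hn] := rim_nth' hp hr.
  have -> : (minn (s + p) N).-1 = pos lam (i.-1, part lam i).
    move: hqi; rewrite /rst /pos /=. have := part_le1 i hp. lia.
  by rewrite hn.
case: ifP => hl.
  move=> hx; case: (key hx) => // -[_ hl2]; rewrite hl2 /= in hl; lia.
rewrite !mem_cat => /orP[hx|hx].
  case: (key hx) => [->//|[e1 e2]].
  rewrite e2 /= in hl *; have -> : i.-1.+1 = i by lia.
  rewrite find_row //; last lia.
  case: f IH hN => [|f] IH hN; first lia.
  by rewrite hqi head_in ?orbT // -hqi.
apply/orP; right; apply: IH => //.
have hl' : (last (0, 0) seg).1 < size lam by rewrite ltnNge hl.
rewrite find_row // -/N.
have he : s <= (minn (s + p) N).-1 < N by lia.
have [rn pe] := rim_nth hp (q := (minn (s + p) N).-1) ltac:(lia).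
rewrite -hlast in rn pe.
move: hl' rn pe; case: (last (0,0) seg) => a b /= hl' rn pe.
move: rn; rewrite /rimnode /= => /and4P[a1 _ hb hb2].
have := part_le1 a.+1 hp; have := part_le1 a hp; rewrite /rst /pos /= in pe *.
lia.
Qed.


Lemma rst1 lam : rst lam 1 = 0.
Proof. by rewrite /rst /pos /=; lia. Qed.

Lemma prim_char p lam x : is_partition lam -> 0 < size lam -> x \in p_rim p lam ->
  exists r q, [/\ 1 <= r <= size lam, rst lam r <= q < rst lam r + p,
     q < size (rim lam), x = nth (0,0) (rim lam) q &
     forall q', rst lam r <= q' < rst lam r + p -> q' < size (rim lam) ->
       nth (0,0) (rim lam) q' \in p_rim p lam].
Proof.
move=> hp l1 hx; apply: L1 => //; exists 1; rewrite ?rst1 //; lia.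
Qed.

Lemma prim_L2 p lam q i : is_partition lam -> 0 < p -> 2 <= i <= size lam ->
  q.+1 = rst lam i -> nth (0,0) (rim lam) q \in p_rim p lam ->
  nth (0,0) (rim lam) q.+1 \in p_rim p lam.
Proof. by move=> hp p0 hi hq; apply: (L2 (i:=i)). Qed.

Lemma rimstar_up p lam a b : a <= b -> in_rimstar p lam (a, b) = ((a, b) \in p_rim p lam).
Proof.
move=> ab; rewrite /in_rimstar /in_U /= ab andbT.
case: (leqP b a) => ba; last by rewrite andbF orbF.
have e : a = b by lia.
by subst; rewrite andbT orbb.
Qed.

Lemma rimstar_sym p lam a b : in_rimstar p lam (a, b) = in_rimstar p lam (b, a).
Proof. by rewrite /in_rimstar orbC. Qed.

Definition Sx p lam x := in_diag lam x && ~~ in_rimstar p lam x.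

Lemma Sx_sym p lam a b : is_partition lam -> self_conjugate lam ->
  Sx p lam (a, b) = Sx p lam (b, a).
Proof. by move=> hp sc; rewrite /Sx diag_sym // rimstar_sym. Qed.

Lemma Sx_up p lam a b : is_partition lam -> self_conjugate lam -> 0 < p ->
  2 <= a <= b -> Sx p lam (a, b) -> Sx p lam (a.-1, b).
Proof.
move=> hp sc p0; case: a => [|a] // hab; rewrite /Sx.
move=> /andP[hd hr]; rewrite /= in hab.
have l1 : 0 < size lam by move: hd; rewrite /in_diag /=; lia.
have hd' : in_diag lam (a, b).
  move: hd; rewrite /in_diag /=; have := part_mono hp (leqnSn a); lia.
rewrite hd' /= rimstar_up; last lia.
apply/negP => hx.
move: hr; rewrite rimstar_up; last lia.
have [r [q [h1 h2 h3 h4 h5]]] := prim_char hp l1 hx.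
have [rn pe] := rim_nth hp h3; rewrite -h4 in rn pe.
move: rn hd; rewrite /rimnode /in_diag /= => rn hd.
have eb : b = part lam a.+1 by lia.
have hq : q.+1 = rst lam a.+1.
  rewrite -pe /rst /pos /= -eb; have := part_le1 a hp; have := part_le1 a.+1 hp; lia.
have := prim_L2 hp p0 (i := a.+1) ltac:(lia) hq; rewrite -h4 => /(_ hx).
have [_ hn] := rim_nth' hp (rimnode_start hp (i:=a.+1) ltac:(lia)).
by rewrite hq /rst hn -eb => ->.
Qed.

Lemma Sx_left p lam a b : is_partition lam -> self_conjugate lam -> 0 < p ->
  a < b -> Sx p lam (a, b) -> Sx p lam (a, b.-1).
Proof.
move=> hp sc p0; case: b => [|b] // hab; rewrite /Sx.
move=> /andP[hd hr]; rewrite /=.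
have l1 : 0 < size lam by move: hd; rewrite /in_diag /=; lia.
have hd' : in_diag lam (a, b).
  by move: hd; rewrite /in_diag /=; lia.
rewrite hd' /= rimstar_up; last lia.
apply/negP => hx.
move: hr; rewrite rimstar_up; last lia.
have [r [q [h1 h2 h3 h4 h5]]] := prim_char hp l1 hx.
have [rn pe] := rim_nth hp h3; rewrite -h4 in rn pe.
have [hsr hnr] := rim_nth' hp (rimnode_start hp h1).
have hne : rst lam r != q.
  apply/negP => /eqP e; move: hnr; rewrite /rst in e; rewrite e -h4 => -[ea eb]; subst r.
  move: hd; rewrite /in_diag /=; lia.
have rn2 : rimnode lam (a, b.+1).
  move: rn hd; rewrite /rimnode /in_diag /=; lia.
have [_ hn2] := rim_nth' hp rn2.
have e2 : pos lam (a, b.+1) = q.-1.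
  move: pe; rewrite /pos /=; move: rn; rewrite /rimnode /= => /and4P[_ _ _ hb].
  have := part_le1 a hp; lia.
have := h5 q.-1; rewrite -e2 hn2 => -> //; lia.
Qed.


Lemma nat_eq_le x y : (forall t, 0 < t -> (t <= x) = (t <= y)) -> x = y.
Proof.
move=> H; apply/eqP; rewrite eqn_leq; apply/andP; split.
  case: x H => [|x] H //; by rewrite -H.
case: y H => [|y] H //; by rewrite H.
Qed.

Lemma sym_selfconj mu : is_partition mu ->
  (forall i j, in_diag mu (i, j) = in_diag mu (j, i)) -> self_conjugate mu.
Proof.
move=> hp hs; apply/eqP.
have hsz : size (conj_part mu) = size mu.
  rewrite /conj_part size_mkseq.
  case E: mu hp hs => [|x s] hp hs //=.
  have hx : 0 < x by move: hp; rewrite /is_partition /= => /andP[_ /andP[]].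
  apply/eqP; rewrite eqn_leq; apply/andP; split.
    have : in_diag (x :: s) (1, x) by rewrite /in_diag /part /=; lia.
    by rewrite hs /in_diag /=; lia.
  have : in_diag (x :: s) ((size s).+1, 1).
    rewrite /in_diag /=; have := part_pos hp (i := (size s).+1) ltac:(rewrite /=; lia). lia.
  by rewrite hs /in_diag /part /=; lia.
apply: (@eq_from_nth _ 0) => // k hk.
rewrite hsz in hk.
have -> : nth 0 (conj_part mu) k = part (conj_part mu) k.+1 by [].
rewrite conj_part_nth //.
have -> : nth 0 mu k = part mu k.+1 by [].
apply: nat_eq_le => t t1.
rewrite count_geq //.
have := hs t k.+1; rewrite /in_diag /= t1 /=.
by rewrite hk andTb.
Qed.

Unset Implicit Arguments.
Theorem lemma3p22 (p : nat) (lam : seq nat) :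
  prime p -> odd p -> lam != [::] -> BG p lam ->
  exists mu : seq nat,
    [/\ is_partition mu,
        (forall x : nat * nat, in_diag mu x = in_diag lam x && ~~ in_rimstar p lam x)
      & BG p mu].
Proof.
move=> pp po hne [hp sc hbg].
have p0 : 0 < p by apply: prime_gt0.
have l1 : 0 < size lam by case: lam hne {hp sc hbg}.
have hl : part lam 1 = size lam by apply: sc_head.
have Hb : forall i j, Sx p lam (i, j) -> [&& 1 <= i, i <= size lam, 1 <= j & j <= size lam].
  move=> i j /andP[hd _]; move: hd; rewrite /in_diag /= => hd.
  have := part_le1 i hp; lia.
have Hr : forall i j, 1 <= i -> Sx p lam (i.+1, j) -> Sx p lam (i, j).
  move=> i j i1 hS.
  have hj : 1 <= j by move: (Hb _ _ hS); lia.
  have [ij|ji] := leqP i.+1 j.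
    by have := Sx_up hp sc p0 (a := i.+1) (b := j) ltac:(lia) hS.
  rewrite Sx_sym // in hS.
  have := Sx_left hp sc p0 (a := j) (b := i.+1) ltac:(lia) hS.
  by rewrite Sx_sym.
have Hc : forall i j, 1 <= j -> Sx p lam (i, j.+1) -> Sx p lam (i, j).
  move=> i j j1; rewrite Sx_sym // => /Hr => /(_ j1); by rewrite Sx_sym.
have [mu [hmu hdm]] := mk_partition Hb Hr Hc.
exists mu; split => //.
have hsym : forall i j, in_diag mu (i, j) = in_diag mu (j, i).
  by move=> i j; rewrite !hdm Sx_sym.
have scm := sym_selfconj hmu hsym.
split => // i /andP[i1 ik].
have him := kdiag_le hmu i1 ik.
have [m em] : {m | part mu i = m} by exists (part mu i).
rewrite em in him.
have hook_mu : hook mu i i = 2 * (m - i) + 1.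
  by rewrite /hook (eqP scm) em; clear -him; lia.
have hSm : Sx p lam (i, m).
  rewrite -hdm /in_diag /= i1 /=.
  have [h|h] := leqP i (size mu); last by move: em him; rewrite part_out // => <-; clear -i1; lia.
  by rewrite ?h em /= leqnn ?andbT; clear -him i1; lia.
have hSm1 : ~~ Sx p lam (i, m.+1).
  by rewrite -hdm /in_diag /= em ltnn !andbF.
have hook_lam : forall r, r <= part lam r -> hook lam r r = 2 * (part lam r - r) + 1.
  by move=> r hr; rewrite /hook (eqP sc); clear -hr; lia.
have hbg' : forall r, 1 <= r -> r <= part lam r -> ~~ (p %| 2 * (part lam r - r) + 1).
  by move=> r r1 hr; rewrite -hook_lam //; apply: hbg; rewrite r1 le_kdiag.
rewrite hook_mu.
move: hSm; rewrite /Sx => /andP[hd hnr]; move: hd; rewrite /in_diag /= => hd.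
have il : i <= size lam by clear -hd; lia.
have hmi : m <= part lam i by clear -hd; lia.
have [hm|hm] := ltnP m (part lam i); last first.
  have -> : m = part lam i by clear -hm hmi; lia.
  apply: hbg' => //; clear -hm hmi him; lia.
have hd1 : in_diag lam (i, m.+1) by rewrite /in_diag /= i1 il hm.
move: hSm1; rewrite /Sx hd1 /= negbK rimstar_up; last by clear -him; lia.
move=> hx.
have [r [q [h1 h2 h3 h4 h5]]] := prim_char hp l1 hx.
have [rn pe] := rim_nth hp h3; rewrite -h4 in rn pe.
move: rn; rewrite /rimnode /= => /and4P[_ _ rn1 rn2].
have [hm2|hm2] := ltnP m (part lam i.+1).
  have e : part lam i.+1 = m.+1 by clear -rn1 hm2; lia.
  have := hbg' i.+1 ltac:(clear; lia) ltac:(clear -e him; lia); rewrite e.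
  by have -> : m.+1 - i.+1 = m - i by clear; lia.
have rn3 : rimnode lam (i, m).
  rewrite /rimnode /= i1 il (ltnW hm) andbT /=; clear -hm2 him i1; lia.
have [hs2 hn2] := rim_nth' hp rn3.
have hpi := part_le1 i hp.
have epos : pos lam (i, m) = q.+1.
  move: pe; rewrite /pos /=; clear -hpi hm him i1; lia.
move: hnr; rewrite rimstar_up; last by clear -him; lia.
move=> hnr.
have hq1 : ~~ (rst lam r <= q.+1 < rst lam r + p).
  apply/negP => hh; have := h5 _ hh; rewrite -epos hn2 => /(_ hs2) hh2.
  by rewrite hh2 in hnr.
have hpr := part_le1 r hp.
move: h2 => /andP[h2a h2b].
have eq0 : q.+1 = rst lam r + p.
  move: hq1; clear -h2a h2b; rewrite negb_and -!ltnNge; case/orP => h; lia.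
have eq1 : part lam r = m - i + r + p.
  move: eq0 epos; rewrite /rst /pos /=; clear -hpr hpi hm him i1 h1; lia.
apply/negP => hdv.
have := hbg' r ltac:(clear -h1; lia) ltac:(clear -eq1; lia).
have -> : 2 * (part lam r - r) + 1 = (2 * (m - i) + 1) + p * 2 by clear -eq1; lia.
by rewrite dvdn_add // dvdn_mulr.
Qed.
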